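(* Let $S$ be a set and $n\le N$ positive integers. For every $\mu\in\mathscr N_n(S)$ there exist real numbers $c(\mu,\nu)$, $\nu\in\mathscr N_N(S)$, all but finitely many equal to zero, such that \[ u^n_{n,\mu}=\sum_{\nu\in\mathscr N_N(S)}c(\mu,\nu)\,u^N_{n,\nu}. \] Moreover (for these coefficients) there exists $K>0$, depending on $n$ and $N$, such that $\sup_{\mu\in\mathscr N_n(S)}\sum_{\nu\in\mathscr N_N(S)}|c(\mu,\nu)|<K$.
   Context: A point measure on $S$ is a measure on all subsets of $S$ of the form $\sum_{i=1}^d c_i\delta_{a_i}$ with $c_i$ nonnegative integers and $a_i\in S$; $\mathscr N_N(S)$ is the set of point measures of total mass $N$. For $x=(x_1,\ldots,x_N)\in S^N$ its type is $\epsilon_x=\sum_{i=1}^N\delta_{x_i}$, and for $\nu\in\mathscr N_N(S)$, $S^N(\nu)=\{x\in S^N:\epsilon_x=\nu\}$ (a finite set). $u_{N,\nu}$ is the uniform probability measure on $S^N(\nu)$, and $u^N_{n,\nu}$ is the image of $u_{N,\nu}$ under the projection $(x_1,\ldots,x_N)\mapsto(x_1,\ldots,x_n)$; these are finitely supported probability measures on $S^n$ (defined on all subsets). *)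

(* Defs.v *)
From mathcomp Require Import all_boot all_algebra.
From mathcomp Require Import boolp classical_sets fsbigop reals cardinality.
Set Implicit Arguments. Unset Strict Implicit. Unset Printing Implicit Defensive.
Import GRing.Theory Num.Theory.
Local Open Scope classical_set_scope.
Local Open Scope ring_scope.

Definition nmeasure (S : Type) := set S -> nat.

Definition point_measure (S : choiceType) (N : nat) : set (nmeasure S) :=
  [set nu | exists (d : nat) (c : 'I_d -> nat) (a : 'I_d -> S),
      (forall A : set S, nu A = (\sum_(i < d) c i * (a i \in A))%N) /\
      (\sum_(i < d) c i)%N = N].

Definition eps (S : choiceType) (N : nat) (x : N.-tuple S) : nmeasure S :=
  fun A => (\sum_(i < N) (tnth x i \in A))%N.

Definition SN (S : choiceType) (N : nat) (nu : nmeasure S) : set (N.-tuple S) :=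
  [set x | eps x = nu].

Definition unif (R : realType) (T : choiceType) (X : set T) (A : set T) : R :=
  (\sum_(x \in X `&` A) (1 : R)) / (\sum_(x \in X) (1 : R)).

Definition proj (S : Type) (n N : nat) (le : (n <= N)%N) (x : N.-tuple S)
  : n.-tuple S := [tuple tnth x (widen_ord le i) | i < n].

(* u^N_{n,nu} : image of the uniform measure u_{N,nu} under proj *)
Definition umarg (R : realType) (S : choiceType) (n N : nat) (le : (n <= N)%N)
  (nu : nmeasure S) (A : set (n.-tuple S)) : R :=
  unif R (SN nu) (proj le @^-1` A).

(* Main.v *)
Require Import Defs.
From mathcomp Require Import all_boot all_algebra all_fingroup.
From mathcomp Require Import boolp classical_sets fsbigop reals cardinality.
From mathcomp Require Import order.
Import Order.TTheory GRing.Theory Num.Theory.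
Local Open Scope classical_set_scope.
Local Open Scope ring_scope.
Set Implicit Arguments. Unset Strict Implicit. Unset Printing Implicit Defensive.

Lemma eps_count (S : choiceType) (M : nat) (x : M.-tuple S) (A : set S) :
  eps x A = count (fun z => z \in A) x.
Proof.
rewrite /eps -sum1_count big_tuple [RHS]big_mkcond /=.
by apply: eq_bigr => i _; case: (tnth x i \in A).
Qed.

Lemma eps_perm (S : choiceType) (M : nat) (x y : M.-tuple S) :
  (eps y = eps x) <-> perm_eq y x.
Proof.
split.
  move=> e; apply/seq.permP => P.
  have := congr1 (fun f => f [set z | P z]) e; rewrite !eps_count /=.
  have H : forall s : seq S, count (fun z => z \in [set z | P z]) s = count P s.
    by move=> s; apply: eq_count => z; apply/idP/idP; rewrite in_setE.
  by rewrite !H.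
move=> /seq.permP h; apply: funext => A; rewrite !eps_count; exact: h.
Qed.

Definition pt (S : Type) (M : nat) (x : M.-tuple S) (t : 'S_M) : M.-tuple S :=
  [tuple tnth x (t i) | i < M].

Lemma ptM (S : Type) (M : nat) (x : M.-tuple S) (a b : 'S_M) :
  pt (pt x a) b = pt x (b * a)%g.
Proof. by apply: eq_from_tnth => i; rewrite !tnth_mktuple permM. Qed.

Lemma pt1 (S : Type) (M : nat) (x : M.-tuple S) : pt x 1%g = x.
Proof. by apply: eq_from_tnth => i; rewrite !tnth_mktuple perm1. Qed.

Lemma perm_pt (S : eqType) (M : nat) (x y : M.-tuple S) :
  perm_eq y x <-> exists t, y = pt x t.
Proof.
split.
  move/tuple_permP => [p hp]; exists p; apply: val_inj; by rewrite /= hp.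
by move=> [t ->]; apply/tuple_permP; exists t.
Qed.

Lemma sum_orbit (R : realType) (S : eqType) (M : nat) (x : M.-tuple S)
  (F : M.-tuple S -> R) :
  let s := undup [seq pt x t | t <- enum 'S_M] in
  \sum_(t : 'S_M) F (pt x t) =
  (\sum_(t : 'S_M) (pt x t == x)%:R) * \sum_(y <- s) F y.
Proof.
move=> s.
have ins : forall t, pt x t \in s.
  by move=> t; rewrite mem_undup; apply: map_f; rewrite mem_enum.
have us : uniq s by apply: undup_uniq.
transitivity (\sum_(t : 'S_M) \sum_(y <- s) (pt x t == y)%:R * F y).
  apply: eq_bigr => t _; rewrite (bigD1_seq (pt x t)) //= eqxx mul1r big1 ?addr0 //.
  by move=> y /negPf; rewrite eq_sym => ->; rewrite mul0r.
rewrite exchange_big /= big_distrr /=; apply: eq_big_seq => y.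
rewrite mem_undup => /mapP [t0 _ ->].
rewrite -big_distrl /=; congr (_ * _).
rewrite (reindex_inj (mulgI t0)) /=; apply: eq_bigr => t _.
congr (_%:R); congr nat_of_bool; apply/eqP/eqP.
  by rewrite -ptM => h; rewrite -[LHS]pt1 -(mulVg t0) -ptM h ptM mulVg pt1.
by rewrite -ptM => ->.
Qed.

Lemma unif_perm (R : realType) (S : choiceType) (M : nat) (x : M.-tuple S)
  (B : set (M.-tuple S)) :
  unif R (SN (eps x)) B = (\sum_(t : 'S_M) (pt x t \in B)%:R) / (M`!)%:R.
Proof.
set s := undup [seq pt x t | t <- enum 'S_M].
have us : uniq s by apply: undup_uniq.
have hSN : SN (eps x) = [set` s].
  apply/seteqP; split => y /=.
    rewrite /SN /= => /eps_perm /perm_pt [t ->].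
    by rewrite mem_undup; apply: map_f; rewrite mem_enum.
  rewrite mem_undup => /mapP [t _ ->]; apply/eps_perm/perm_pt; by exists t.
rewrite /unif hSN fsbig_mkcondr -!fsbig_seq //.
have h1 := sum_orbit (R:=R) x (fun y => (y \in B)%:R).
have h2 := sum_orbit (R:=R) x (fun _ => 1).
rewrite -/s in h1 h2.
have -> : (M`!)%:R = \sum_(t : 'S_M) (1 : R).
  by rewrite sumr_const card_Sn.
rewrite h1 h2.
set c := \sum_(t : 'S_M) _.
have c0 : c != 0.
  rewrite /c (bigD1 1%g) //= pt1 eqxx /=; apply: lt0r_neq0.
  apply: ltr_wpDr; first by apply: sumr_ge0 => i _; apply: ler0n.
  by [].
rewrite -mulf_div divff // mul1r; congr (_ / _).
by apply: eq_bigr => y _; case: (y \in B).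
Qed.

Definition Un (R : realType) (T : finType) (n : nat) (h t : n.-tuple T) : R :=
  (\sum_(s : 'S_n) (pt h s == t)%:R) / (n`!)%:R.

Definition UN (R : realType) (T : finType) (n N : nat) (hnN : (n <= N)%N)
  (g : N.-tuple T) (t : n.-tuple T) : R :=
  (\sum_(s : 'S_N) (proj hnN (pt g s) == t)%:R) / (N`!)%:R.

Definition W (R : realType) (T : finType) (n N : nat) (hnN : (n <= N)%N)
  (f : n.-tuple T -> R) : Prop :=
  exists w : N.-tuple T -> R, forall t, f t = \sum_g w g * UN R hnN g t.

Lemma W_ext (R : realType) (T : finType) n N (hnN : (n <= N)%N) (f g : n.-tuple T -> R) :
  (forall t, f t = g t) -> W hnN f -> W hnN g.
Proof. by move=> e [w hw]; exists w => t; rewrite -e. Qed.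

Lemma W_UN (R : realType) (T : finType) n N (hnN : (n <= N)%N) (g : N.-tuple T) : W hnN (UN R hnN g).
Proof.
exists (fun g' => (g' == g)%:R) => t.
rewrite (bigD1 g) //= eqxx mul1r big1 ?addr0 // => g' /negPf ->; by rewrite mul0r.
Qed.

Lemma W_lin (R : realType) (T : finType) n N (hnN : (n <= N)%N) (a b : R) (f1 f2 : n.-tuple T -> R) :
  W hnN f1 -> W hnN f2 -> W hnN (fun t => a * f1 t + b * f2 t).
Proof.
move=> [w1 h1] [w2 h2]; exists (fun g => a * w1 g + b * w2 g) => t.
rewrite h1 h2 !big_distrr -big_split /=; apply: eq_bigr => g _.
by rewrite mulrDl !mulrA.
Qed.

Lemma W_sum (R : realType) (T : finType) n N (hnN : (n <= N)%N) (I : finType) (P : pred I)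
  (F : I -> n.-tuple T -> R) :
  (forall i, P i -> W hnN (F i)) -> W hnN (fun t => \sum_(i | P i) F i t).
Proof.
move=> h.
have h' : forall i, exists w : N.-tuple T -> R,
   P i -> forall t, F i t = \sum_g w g * UN R hnN g t.
  move=> i; case: (boolP (P i)) => Pi.
    by have [w hw] := h i Pi; exists w.
  by exists (fun _ => 0).
have [ws hws] := choice h'.
exists (fun g => \sum_(i | P i) ws i g) => t.
under eq_bigr => i Pi do rewrite (hws i Pi t).
rewrite exchange_big /=; apply: eq_bigr => g _; by rewrite big_distrl.
Qed.

Definition liftf n N (hnN : (n <= N)%N) (s : 'S_n) (i : 'I_N) : 'I_N :=
  oapp (fun j => widen_ord hnN (s j)) i (insub (val i) : option 'I_n).

Lemma liftf_inj n N (hnN : (n <= N)%N) (s : 'S_n) : injective (liftf hnN s).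
Proof.
move=> i k; rewrite /liftf.
case: insubP => [j Pi vj|Ni]; case: insubP => [l Pk vl|Nk] /=.
- move=> /(congr1 val) /= /val_inj /perm_inj ejl; apply: val_inj.
  by rewrite -vj -vl ejl.
- by move=> e; move: Nk; rewrite -e /= ltn_ord.
- by move=> e; move: Ni; rewrite e /= ltn_ord.
- done.
Qed.

Definition liftp n N (hnN : (n <= N)%N) (s : 'S_n) : 'S_N := perm (@liftf_inj n N hnN s).

Lemma liftpE n N (hnN : (n <= N)%N) (s : 'S_n) (j : 'I_n) :
  liftp hnN s (widen_ord hnN j) = widen_ord hnN (s j).
Proof.
rewrite permE /liftf /=; case: insubP => [j' _ vj|] /=; last by rewrite ltn_ord.
by congr (widen_ord _ (s _)); apply: val_inj.
Qed.

Lemma proj_pt_lift (T : Type) n N (hnN : (n <= N)%N) (s : 'S_n) (y : N.-tuple T) :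
  proj hnN (pt y (liftp hnN s)) = pt (proj hnN y) s.
Proof.
by apply: eq_from_tnth => i; rewrite !tnth_mktuple liftpE.
Qed.

Lemma pt_inj (T : Type) n (s : 'S_n) : injective (fun y : n.-tuple T => pt y s).
Proof.
move=> y1 y2 /= e.
by rewrite -[y1]pt1 -[y2]pt1 -(mulVg s) -!ptM e.
Qed.

Lemma UN_exch (R : realType) (T : finType) n N (hnN : (n <= N)%N)
  (g : N.-tuple T) (t : n.-tuple T) (s : 'S_n) :
  UN R hnN g (pt t s) = UN R hnN g t.
Proof.
rewrite /UN; congr (_ / _).
rewrite (reindex_inj (mulgI (liftp hnN s))) /=; apply: eq_bigr => u _.
rewrite -ptM proj_pt_lift; congr (_%:R); congr nat_of_bool.
by apply/eqP/eqP => [/pt_inj|->].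
Qed.

Lemma UN_decomp (R : realType) (T : finType) n N (hnN : (n <= N)%N)
  (g : N.-tuple T) (t : n.-tuple T) :
  UN R hnN g t = \sum_(h : n.-tuple T) UN R hnN g h * Un R h t.
Proof.
rewrite /Un.
transitivity (\sum_(s : 'S_n) UN R hnN g t / (n`!)%:R).
  rewrite -big_distrl /= sumr_const card_Sn -[UN R hnN g t *+ _]mulr_natr mulfK //.
  by rewrite pnatr_eq0 -lt0n fact_gt0.
rewrite (eq_bigr (fun h => (\sum_(s : 'S_n) UN R hnN g h * (pt h s == t)%:R) / (n`!)%:R)); last first.
  by move=> h _; rewrite mulrA big_distrr.
rewrite -[LHS]big_distrl -[RHS]big_distrl /= exchange_big /=; congr (_ / _).
apply: eq_bigr => s _.
rewrite (bigD1 (pt t s^-1)) //= ptM mulgV pt1 eqxx mulr1 big1 ?addr0.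
  by rewrite UN_exch.
move=> h hne; case: eqP => [e|]; last by rewrite mulr0.
by move: hne; rewrite -e ptM mulVg pt1 eqxx.
Qed.

Lemma ghat_size (T : Type) (z : T) n N (hnN : (n <= N)%N) (h : n.-tuple T) :
  size (val h ++ nseq (N - n) z) == N.
Proof. by rewrite size_cat size_tuple size_nseq subnKC. Qed.

Definition ghat (T : Type) (z : T) n N (hnN : (n <= N)%N) (h : n.-tuple T)
  : N.-tuple T := Tuple (ghat_size z hnN h).

Lemma proj_ghat (T : Type) (z : T) n N (hnN : (n <= N)%N) (h : n.-tuple T) :
  proj hnN (ghat z hnN h) = h.
Proof.
apply: eq_from_tnth => i; rewrite tnth_mktuple (tnth_nth z) /= nth_cat size_tuple.
by rewrite ltn_ord -tnth_nth.
Qed.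

Lemma proj_take (T : Type) n N (hnN : (n <= N)%N) (y : N.-tuple T) :
  val (proj hnN y) = take n (val y).
Proof.
case: n hnN y => [|n] hnN y; first by rewrite take0; case: (proj hnN y) => -[].
have x0 : T by exact: tnth y (widen_ord hnN ord0).
apply: (@eq_from_nth _ x0); first by rewrite size_tuple size_takel // size_tuple.
move=> i; rewrite size_tuple => hi.
have := tnth_nth x0 (proj hnN y) (Ordinal hi); rewrite /= => <-.
by rewrite tnth_mktuple (tnth_nth x0) nth_take.
Qed.

Lemma count_proj (T : eqType) n N (hnN : (n <= N)%N) (y : N.-tuple T) a :
  (count_mem a (proj hnN y) <= count_mem a y)%N.
Proof.
rewrite proj_take -[X in (_ <= count _ X)%N](cat_take_drop n (val y)) count_cat; exact: leq_addr.
Qed.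

Lemma UN_ge0 (R : realType) (T : finType) n N (hnN : (n <= N)%N) (g : N.-tuple T) (t : n.-tuple T) :
  0 <= UN R hnN g t :> R.
Proof.
apply: divr_ge0; last by apply: ler0n.
by apply: sumr_ge0 => i _; apply: ler0n.
Qed.

Lemma UN_support (R : realType) (T : finType) n N (hnN : (n <= N)%N) (g : N.-tuple T) (t : n.-tuple T) :
  UN R hnN g t != 0 -> exists s : 'S_N, proj hnN (pt g s) = t.
Proof.
apply: contraNP => hne; rewrite /UN big1 ?mul0r //= => s _.
by case: eqP => // e; case: hne; exists s.
Qed.

Lemma tri (R : realType) (T : finType) (z : T) n N (hnN : (n <= N)%N)
  (h t : n.-tuple T) :
  UN R hnN (ghat z hnN h) t != 0 -> ~~ perm_eq t h ->
  (count_mem z h < count_mem z t)%N.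
Proof.
move=> /UN_support [s <-]; set y := pt _ s.
have py : perm_eq y (ghat z hnN h) by apply/perm_pt; exists s.
have hc : forall a, (count_mem a (proj hnN y) <= count_mem a h + (z == a) * (N - n))%N.
  move=> a; apply: (leq_trans (count_proj hnN y a)).
  by rewrite (seq.permP py) /= count_cat count_nseq.
apply: contraR; rewrite -leqNgt => hz.
have hall : forall a, (count_mem a (proj hnN y) <= count_mem a h)%N.
  move=> a; case: (eqVneq z a) => [<-|za] //.
  by have := hc a; rewrite (negPf za) mul0n addn0.
have [s' ss' ps'] := (count_subseqP _ _).1 hall.
have := size_subseq_leqif ss'.
rewrite -(perm_size ps') !size_tuple => -[_]; rewrite eqxx => /esym/eqP es.
by rewrite -es.
Qed.

Lemma Un_perm (R : realType) (T : finType) n (h t u : n.-tuple T) :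
  perm_eq t h -> Un R t u = Un R h u.
Proof.
move=> /perm_pt [r ->]; rewrite /Un; congr (_ / _).
rewrite [RHS](reindex_inj (mulIg r)) /=; apply: eq_bigr => s _.
by rewrite ptM.
Qed.

Lemma UN_pos (R : realType) (T : finType) (z : T) n N (hnN : (n <= N)%N)
  (h : n.-tuple T) : 0 < UN R hnN (ghat z hnN h) h.
Proof.
rewrite /UN; apply: divr_gt0; last by rewrite ltr0n fact_gt0.
rewrite (bigD1 1%g) //= pt1 proj_ghat eqxx /=.
apply: ltr_wpDr; first by apply: sumr_ge0 => i _; apply: ler0n.
by [].
Qed.

Lemma Un_step (R : realType) (T : finType) (z : T) n N (hnN : (n <= N)%N)
  (h : n.-tuple T) :
  (forall t : n.-tuple T, (count_mem z h < count_mem z t)%N -> W hnN (Un R t)) ->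
  W hnN (Un R h).
Proof.
move=> IH; set g := ghat z hnN h.
set beta := \sum_(t' : n.-tuple T | perm_eq t' h) UN R hnN g t'.
set Rst := fun t : n.-tuple T => \sum_(t' : n.-tuple T | ~~ perm_eq t' h) UN R hnN g t' * Un R t' t.
have hb : 0 < beta.
  rewrite /beta (bigD1 h) ?perm_refl //=; apply: ltr_wpDr.
    by apply: sumr_ge0 => i _; apply: UN_ge0.
  exact: UN_pos.
have hR : W hnN Rst.
  apply: W_sum => t' ht'.
  case: (eqVneq (UN R hnN g t') 0) => [e|ne].
    apply: (W_ext (f := fun t => 0 * UN R hnN g t + 0 * UN R hnN g t)).
      by move=> t; rewrite e !mul0r addr0.
    by apply: W_lin; apply: W_UN.
  apply: (W_ext (f := fun t => UN R hnN g t' * Un R t' t + 0 * Un R t' t)).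
    by move=> t; rewrite mul0r addr0.
  by apply: W_lin; apply: IH; exact: (tri ne ht').
apply: (W_ext (f := fun t => beta^-1 * UN R hnN g t + (- beta^-1) * Rst t)); last first.
  by apply: W_lin => //; apply: W_UN.
move=> t; rewrite UN_decomp (bigID (fun t' : n.-tuple T => perm_eq t' h)) /=.
rewrite -/(Rst t).
have -> : \sum_(t' : n.-tuple T | perm_eq t' h) UN R hnN g t' * Un R t' t = beta * Un R h t.
  rewrite /beta big_distrl /=; apply: eq_bigr => t' ht'.
  by rewrite (Un_perm R t ht').
rewrite mulrDr mulrA mulVf ?lt0r_neq0 // mul1r mulNr addrK.
by [].
Qed.

Lemma Un_W (R : realType) (T : finType) (z : T) n N (hnN : (n <= N)%N)
  (h : n.-tuple T) : W hnN (Un R h).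
Proof.
suff : forall m (h : n.-tuple T), (n - count_mem z h <= m)%N -> W hnN (Un R h).
  by move=> /(_ _ h (leqnn _)).
elim=> [|m IHm] h' hm; apply: (@Un_step R T z n N hnN h') => t ht.
  have := count_size (pred1 z) t; rewrite size_tuple.
  by move: hm ht; rewrite leqn0 subn_eq0 => hm ht ht2; have := leq_ltn_trans hm ht; rewrite ltnNge ht2.
apply: IHm.
have := count_size (pred1 z) t; rewrite size_tuple => ht2.
rewrite -ltnS (leq_trans _ hm) // ltn_sub2l //.
by apply: leq_trans ht2.
Qed.

Lemma sum_fiber (R : realType) (X Y : finType) (phi : X -> Y) (F : Y -> R) :
  \sum_x F (phi x) = \sum_y F y * \sum_x (phi x == y)%:R.
Proof.
transitivity (\sum_x \sum_y (phi x == y)%:R * F y).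
  apply: eq_bigr => x _; rewrite (bigD1 (phi x)) //= eqxx mul1r big1 ?addr0 //.
  by move=> y /negPf; rewrite eq_sym => ->; rewrite mul0r.
rewrite exchange_big /=; apply: eq_bigr => y _; rewrite big_distrr /=.
by apply: eq_bigr => x _; rewrite mulrC.
Qed.

Lemma fs_collapse (R : realType) (V : choiceType) (P : set V) (G : finType)
  (E : G -> V) (w : G -> R) (u : V -> R) :
  (forall g, P (E g)) ->
  \sum_(v \in P) (\sum_g w g * (E g == v)%:R) * u v = \sum_g w g * u (E g).
Proof.
move=> PE.
set r := undup [seq E g | g <- enum G].
have ur : uniq r by apply: undup_uniq.
have inr : forall g, E g \in r by move=> g; rewrite mem_undup map_f // mem_enum.
rewrite (fsbigE r) //; last first.
    move=> v _ vr; rewrite big1 ?mul0r // => g _.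
    by case: eqP => [e|]; [move: vr; rewrite -e inr | rewrite mulr0].
  by move=> v /=; rewrite mem_undup => /mapP [g _ ->].
rewrite big_seq_cond (eq_bigl (fun v => v \in r)); last first.
  move=> v; apply/andP/idP => [[]//|vr]; split => //.
  by move: vr; rewrite mem_undup => /mapP [g _ ->]; apply: mem_set.
rewrite -big_seq.
transitivity (\sum_(v <- r) \sum_g w g * ((E g == v)%:R * u v)).
  by apply: eq_bigr => v _; rewrite big_distrl /=; apply: eq_bigr => g _; rewrite mulrA.
rewrite exchange_big /=; apply: eq_bigr => g _; rewrite -big_distrr /=; congr (_ * _).
rewrite (bigD1_seq (E g)) //= eqxx mul1r big1 ?addr0 // => v /negPf.
by rewrite eq_sym => ->; rewrite mul0r.
Qed.

Lemma fs_collapse_norm (R : realType) (V : choiceType) (P : set V) (G : finType)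
  (E : G -> V) (w : G -> R) :
  (forall g, P (E g)) ->
  \sum_(v \in P) `| \sum_g w g * (E g == v)%:R | <= \sum_g `|w g|.
Proof.
move=> PE.
set r := undup [seq E g | g <- enum G].
have ur : uniq r by apply: undup_uniq.
have inr : forall g, E g \in r by move=> g; rewrite mem_undup map_f // mem_enum.
rewrite (fsbigE r) //; last first.
    move=> v _ vr; rewrite big1 ?normr0 // => g _.
    by case: eqP => [e|]; [move: vr; rewrite -e inr | rewrite mulr0].
  by move=> v /=; rewrite mem_undup => /mapP [g _ ->].
apply: (le_trans (y := \sum_(v <- r) \sum_g `|w g| * (E g == v)%:R)).
  rewrite big_mkcond /=; apply: ler_sum => v _; case: (_ \in _); last first.
    by apply: sumr_ge0 => g _; apply: mulr_ge0 => //; apply: ler0n.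
  apply: (le_trans (ler_norm_sum _ _ _)); apply: ler_sum => g _.
  by rewrite normrM normr_nat.
rewrite exchange_big /=; apply: ler_sum => g _; rewrite -big_distrr /=.
rewrite (bigD1_seq (E g)) //= eqxx big1 ?addr0 ?mulr1 // => v /negPf.
by rewrite eq_sym => ->.
Qed.

Lemma fs_finite (R : realType) (V : choiceType) (P : set V) (G : finType)
  (E : G -> V) (w : G -> R) :
  finite_set [set v | P v /\ \sum_g w g * (E g == v)%:R != 0].
Proof.
apply: (sub_finite_set _ (finite_seq [seq E g | g <- enum G])).
move=> v /= [_]; apply: contraNP => vr; rewrite big1 ?eqxx // => g _.
case: eqP => [e|]; last by rewrite mulr0.
by case: vr; rewrite -e map_f // mem_enum.
Qed.

Lemma pm_tuple (S : choiceType) n (mu : nmeasure S) :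
  point_measure n mu -> exists x0 : n.-tuple S, eps x0 = mu.
Proof.
move=> [d [c [a [hA hs]]]].
set s := flatten [seq nseq (c i) (a i) | i <- enum 'I_d].
have hsz : size s == n.
  rewrite size_flatten /shape -map_comp sumnE big_map big_enum /= -hs.
  by apply/eqP; apply: eq_bigr => i _; rewrite /= size_nseq.
exists (Tuple hsz); apply: funext => A; rewrite eps_count hA /= count_flatten.
rewrite -map_comp sumnE big_map big_enum /=; apply: eq_bigr => i _.
by rewrite /= count_nseq mulnC.
Qed.

Lemma eps_pm (S : choiceType) N (y : N.-tuple S) : point_measure N (eps y).
Proof.
exists N, (fun _ => 1%N), (tnth y); split; last by rewrite sum1_card card_ord.
by move=> A; rewrite /eps; apply: eq_bigr => i _; rewrite mul1n.
Qed.

Lemma umarg_perm (R : realType) (S : choiceType) n N (hnN : (n <= N)%N)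
  (y : N.-tuple S) (A : set (n.-tuple S)) :
  umarg R hnN (eps y) A =
  (\sum_(s : 'S_N) (proj hnN (pt y s) \in A)%:R) / (N`!)%:R.
Proof.
rewrite /umarg unif_perm; congr (_ / _); apply: eq_bigr => s _.
Qed.

Lemma proj_id (S : Type) n (t : n.-tuple S) : proj (leqnn n) t = t.
Proof.
by apply: eq_from_tnth => i; rewrite tnth_mktuple; congr tnth; apply: val_inj.
Qed.

Lemma pt_map (T S : Type) M (f : T -> S) (t : M.-tuple T) (s : 'S_M) :
  pt (map_tuple f t) s = map_tuple f (pt t s).
Proof. by apply: eq_from_tnth => i; rewrite !(tnth_mktuple, tnth_map). Qed.

Lemma proj_map (T S : Type) n N (hnN : (n <= N)%N) (f : T -> S) (t : N.-tuple T) :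
  proj hnN (map_tuple f t) = map_tuple f (proj hnN t).
Proof. by apply: eq_from_tnth => i; rewrite !(tnth_mktuple, tnth_map). Qed.

Lemma map_ord (S : Type) n (x0 : n.-tuple S) : map_tuple (tnth x0) (ord_tuple n) = x0.
Proof. by apply: eq_from_tnth => i; rewrite tnth_map tnth_ord_tuple. Qed.

Theorem lemma1 (R : realType) (n N : nat) (hn : (0 < n)%N) (hnN : (n <= N)%N) :
  exists K : R, 0 < K /\
  forall S : choiceType,
  exists c : nmeasure S -> nmeasure S -> R,
    (forall mu, point_measure n mu ->
       finite_set [set nu | point_measure N nu /\ c mu nu != 0] /\
       (forall A : set (n.-tuple S),
          umarg R (leqnn n) mu A =
          \sum_(nu \in point_measure N) c mu nu * umarg R hnN nu A)) /\
    (forall mu, point_measure n mu ->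
       \sum_(nu \in point_measure N) `|c mu nu| < K).
Proof.
pose z : 'I_n := Ordinal hn.
have [w hw] := @Un_W R _ z n N hnN (ord_tuple n).
exists (\sum_g `|w g| + 1); split.
  apply: ltr_wpDl; last exact: ltr01.
  by apply: sumr_ge0 => g _; apply: normr_ge0.
move=> S.
have hc : forall mu : nmeasure S, exists cm : nmeasure S -> R,
  point_measure n mu ->
   (finite_set [set nu | point_measure N nu /\ cm nu != 0] /\
       (forall A : set (n.-tuple S),
          umarg R (leqnn n) mu A =
          \sum_(nu \in point_measure N) cm nu * umarg R hnN nu A)) /\
   \sum_(nu \in point_measure N) `|cm nu| < \sum_g `|w g| + 1.
  move=> mu; case: (pselect (point_measure n mu)) => pm; last by exists (fun _ => 0).
  have [x0 hx0] := pm_tuple pm.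
  pose E := fun g : N.-tuple 'I_n => eps (map_tuple (tnth x0) g).
  have PE : forall g, point_measure N (E g) by move=> g; exact: eps_pm.
  exists (fun nu => \sum_(g : N.-tuple 'I_n) w g * (E g == nu)%:R) => _.
  split; [split|].
  - exact: fs_finite.
  - move=> A; rewrite (fs_collapse _ _ PE).
    pose F := fun t : n.-tuple 'I_n => (map_tuple (tnth x0) t \in A)%:R : R.
    rewrite -hx0 umarg_perm.
    under [RHS]eq_bigr => g _ do rewrite /E umarg_perm.
    transitivity (\sum_t F t * Un R (ord_tuple n) t).
      rewrite /Un (eq_bigr (fun s => F (pt (ord_tuple n) s))); last first.
        by move=> s _; rewrite proj_id -{1}(map_ord x0) pt_map.
      rewrite sum_fiber big_distrl /=; apply: eq_bigr => t _; by rewrite mulrA.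
    transitivity (\sum_g w g * \sum_t F t * UN R hnN g t); last first.
      apply: eq_bigr => g _; congr (_ * _).
      rewrite /UN (eq_bigr (fun s => F (proj hnN (pt g s)))); last first.
        by move=> s _; rewrite pt_map proj_map.
      rewrite sum_fiber big_distrl /=; apply: eq_bigr => t _; by rewrite mulrA.
    under eq_bigr => t _ do rewrite hw big_distrr /=.
    rewrite exchange_big /=; apply: eq_bigr => g _; rewrite big_distrr /=.
    by apply: eq_bigr => t _; rewrite mulrA (mulrC (F t)) mulrA.
  - apply: (le_lt_trans (fs_collapse_norm _ PE)).
    by rewrite ltrDl ltr01.
have [c hcP] := choice hc.
exists c; split => mu pm; have [[h1 h2] h3] := hcP mu pm; by [split|].
Qed.
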